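(* There exists an absolute constant $c>0$ such that the following holds. Let $r$ be a positive integer and let $M\in\{0,1\}^{n\times n}$ with $\operatorname{rank}(M)\leq r$ and $d=|M|/n\leq n/2$. Then $$\operatorname{pdisc}(M)\geq c\cdot\min\left\{dn,\frac{d^{1/2}n^{3/2}}{\sqrt r}\right\}.$$
   Context: $|M|$ is the number of $1$ entries of $M$; let $N=2n$ and $p=|M|/n^2$. The symmetrization of $M$ is the symmetric matrix $A\in\mathbb{R}^{N\times N}$ with $A_{i,j+n}=A_{j+n,i}=M_{i,j}$ and all other entries $0$. $L\in\mathbb{R}^{N\times N}$ is the adjacency matrix of the complete bipartite graph with parts $[n]$ and $[n+1,N]$. For $X\in\mathbb{R}^{N\times N}$, $\operatorname{disc}(X)=\langle X,A\rangle-p\langle X,L\rangle$ (entrywise inner product), and $\operatorname{pdisc}(M)=\max\{\operatorname{disc}(X): X\text{ symmetric positive semidefinite},\ X_{i,i}\leq1\ \forall i\}$. *)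

(* Defs.v *)
From HB Require Import structures.
From mathcomp Require Import all_boot all_order all_algebra.
From mathcomp Require Import boolp classical_sets reals.
Set Implicit Arguments. Unset Strict Implicit. Unset Printing Implicit Defensive.
Import Order.TTheory GRing.Theory Num.Theory.
Local Open Scope ring_scope.
Local Open Scope classical_set_scope.

Section Defs.
Variable R : realType.

(* |M| : number of 1 entries of a 0/1 matrix = sum of its entries *)
Definition mass n (M : 'M[R]_n) : R := \sum_(i < n) \sum_(j < n) M i j.

Definition density n (M : 'M[R]_n) : R := mass M / (n%:R ^+ 2).

Definition symmetrization n (M : 'M[R]_n) : 'M[R]_(n + n) :=
  block_mx 0 M M^T 0.

Definition Kbip n : 'M[R]_(n + n) :=
  block_mx 0 (const_mx 1) (const_mx 1) 0.

Definition frob m (X Y : 'M[R]_m) : R := \sum_(i < m) \sum_(j < m) X i j * Y i j.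

Definition disc n (M : 'M[R]_n) (X : 'M[R]_(n + n)) : R :=
  frob X (symmetrization M) - density M * frob X (Kbip n).

Definition psd m (X : 'M[R]_m) : Prop :=
  X^T = X /\ forall v : 'cV[R]_m, 0 <= (v^T *m X *m v) 0 0.

Definition pdisc n (M : 'M[R]_n) : R :=
  sup [set disc M X | X in [set X : 'M[R]_(n + n) | psd X /\ forall i, X i i <= 1]].

End Defs.

(* Main.v *)
Require Import Defs.
From HB Require Import structures.
From mathcomp Require Import all_boot all_order all_algebra.
From mathcomp Require Import boolp classical_sets reals.
From mathcomp Require Import ring lra.
Set Implicit Arguments. Unset Strict Implicit. Unset Printing Implicit Defensive.
Import Order.TTheory GRing.Theory Num.Theory.
Local Open Scope ring_scope.

Section Aux.
Variable R : realType.

Lemma quad_delta m (X : 'M[R]_m) i j :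
  ((delta_mx i (0:'I_1) : 'cV[R]_m)^T *m X *m (delta_mx j (0:'I_1) : 'cV[R]_m)) = const_mx (X i j).
Proof.
apply/matrixP=> a b; rewrite [a]ord1 [b]ord1.
rewrite trmx_delta -rowE -colE !mxE //.
Qed.

Lemma psd_entry m (X : 'M[R]_m) : psd X -> (forall i, X i i <= 1) ->
  forall i j, `|X i j| <= 1.
Proof.
move=> [Xs Xp] Xd i j.
have Xji : X j i = X i j by rewrite -[in LHS]Xs mxE.
have key : forall s : R, 0 <= X i i + s * X i j + s * X j i + s ^+ 2 * X j j.
  move=> s; have := Xp (delta_mx i (0:'I_1) + s *: delta_mx j (0:'I_1)).
  rewrite !(linearD, linearZ, mulmxDl, mulmxDr, =^~ scalemxAl, =^~ scalemxAr) /=.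
  rewrite !quad_delta !mxE.
  by congr (_ <= _); rewrite expr2; ring.
have k1 := key 1; have k2 := key (-1).
rewrite Xji in k1 k2.
have := Xd i; have := Xd j.
rewrite ler_norml; move=> h1 h2; apply/andP; split; nra.
Qed.

Lemma disc_sum n (M : 'M[R]_n) X : disc M X =
  \sum_i \sum_j X i j * (symmetrization M i j - density M * Kbip R n i j).
Proof.
rewrite /disc /frob mulr_sumr -sumrB; apply: eq_bigr => i _.
rewrite mulr_sumr -sumrB; apply: eq_bigr => j _; ring.
Qed.

Lemma disc_le_pdisc n (M : 'M[R]_n) X : psd X -> (forall i, X i i <= 1) ->
  disc M X <= pdisc M.
Proof.
move=> Xp Xd; apply: ub_le_sup; last by exists X.
exists (\sum_i \sum_j `|symmetrization M i j - density M * Kbip R n i j|).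
move=> _ [Y [Yp Yd] <-]; rewrite disc_sum.
apply: ler_sum => i _; apply: ler_sum => j _.
apply: le_trans (ler_norm _) _; rewrite normrM.
apply: ler_piMl => //; exact: psd_entry.
Qed.


Lemma sum_block n (F : 'I_(n+n) -> 'I_(n+n) -> R) (f : 'I_n -> 'I_n -> R) :
  (forall i j, F (lshift n i) (lshift n j) = 0) ->
  (forall i j, F (rshift n i) (rshift n j) = 0) ->
  (forall i j, F (lshift n i) (rshift n j) = f i j) ->
  (forall i j, F (rshift n i) (lshift n j) = f j i) ->
  \sum_i \sum_j F i j = 2 * \sum_i \sum_j f i j.
Proof.
move=> h1 h2 h3 h4.
rewrite big_split_ord /=.
rewrite (eq_bigr (fun i => \sum_j f i j)); last first.
  move=> i _; rewrite big_split_ord /= big1 ?add0r; last by move=> j _; exact: h1.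
  by apply: eq_bigr => j _; exact: h3.
rewrite [in X in _ + X](eq_bigr (fun i => \sum_j f j i)); last first.
  move=> i _; rewrite big_split_ord /= [in X in _ + X]big1 ?addr0; last by move=> j _; exact: h2.
  by apply: eq_bigr => j _; exact: h4.
by rewrite [in X in _ + X]exchange_big /= mulr2n mulrDl mul1r.
Qed.

Lemma gram n m (M : 'M[R]_n) (U V : 'M[R]_(n, m)) :
  (forall i, \sum_l U i l ^+ 2 <= 1) -> (forall j, \sum_l V j l ^+ 2 <= 1) ->
  2 * \sum_i \sum_j (M i j - density M) * (\sum_l U i l * V j l) <= pdisc M.
Proof.
move=> hU hV.
set W := col_mx U V.
set X := W *m W^T.
have Xe : forall a b, X a b = \sum_l W a l * W b l.
  by move=> a b; rewrite /X mxE; apply: eq_bigr => l _; rewrite [W^T _ _]mxE.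
have Xpsd : psd X.
  rewrite /psd; split; first by rewrite /X trmx_mul trmxK.
  move=> v; set z := (v^T *m W).
  have -> : v^T *m X *m v = z *m z^T by rewrite /z trmx_mul trmxK /X !mulmxA.
  rewrite mxE; apply: sumr_ge0 => l _; rewrite [z^T _ _]mxE -expr2; exact: sqr_ge0.
have Xd : forall a, X a a <= 1.
  move=> a; rewrite Xe -(splitK a); case: (split a) => k /=.
    rewrite /W; under eq_bigr do rewrite col_mxEu -expr2; exact: hU.
  rewrite /W; under eq_bigr do rewrite col_mxEd -expr2; exact: hV.
apply: le_trans (disc_le_pdisc M Xpsd Xd); rewrite le_eqVlt; apply/orP; left; apply/eqP; symmetry.
rewrite disc_sum /symmetrization /Kbip.
apply: sum_block => i j.
- by rewrite !block_mxEul !mxE; ring.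
- by rewrite !block_mxEdr !mxE; ring.
- rewrite Xe !block_mxEur mxE mulrC mulr1; congr (_ * _); apply: eq_bigr => l _.
  by rewrite /W col_mxEu col_mxEd.
- rewrite Xe !block_mxEdl !mxE mulrC mulr1; congr (_ * _); apply: eq_bigr => l _.
  by rewrite /W col_mxEu col_mxEd mulrC.
Qed.


Lemma proj_exists m n (C : 'M[R]_(m, n)) : exists P : 'M[R]_n,
  [/\ P^T = P, P *m P = P, \tr P = (\rank C)%:R &
      forall k (B : 'M_(k, n)), (B <= C)%MS -> B *m P = B].
Proof.
set V := row_base C.
have fV : row_free V by exact: row_base_free.
have sCV : (C <= V)%MS by rewrite eq_row_base.
have rV : \rank C = \rank C by [].
clearbody V.
set G := V *m V^T.
have Gu : G \in unitmx.
  rewrite -row_free_unit; apply: inj_row_free => x hx.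
  apply/eqP; rewrite -(mulmx_free_eq0 _ fV); apply/eqP.
  set y := x *m V.
  have yy : y *m y^T = 0 by rewrite /y trmx_mul mulmxA -(mulmxA x) hx mul0mx.
  have : (y *m y^T) 0 0 = 0 by rewrite yy mxE.
  rewrite mxE => /eqP; rewrite psumr_eq0; last by move=> l _; rewrite [y^T _ _]mxE -expr2 sqr_ge0.
  move=> /allP yl; apply/rowP => l; rewrite [RHS]mxE.
  by have := yl l (mem_index_enum l); rewrite [y^T _ _]mxE -expr2 sqrf_eq0 => /eqP.
set P := V^T *m invmx G *m V.
have VP : V *m P = V by rewrite /P !mulmxA -/G (mulmxV Gu) mul1mx.
exists P; split.
- by rewrite /P !trmx_mul trmxK trmx_inv /G trmx_mul trmxK mulmxA.
- by rewrite {1}/P -!mulmxA VP mulmxA.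
- by rewrite /P mxtrace_mulC mulmxA -/G (mulmxV Gu) mxtrace1.
- move=> k B sBC; have : (B <= V)%MS by exact: submx_trans sCV.
  by case/submxP => D ->; rewrite -mulmxA VP.
Qed.


Lemma cut_lb n (M : 'M[R]_n) (x y : 'I_n -> R) :
  (forall i, x i ^+ 2 <= 1) -> (forall j, y j ^+ 2 <= 1) ->
  2 * \sum_i \sum_j (M i j - density M) * (x i * y j) <= pdisc M.
Proof.
move=> hx hy.
have := gram M (U := \matrix_(i < n, l < 1) x i) (V := \matrix_(j < n, l < 1) y j).
rewrite (eq_bigr (fun i => \sum_j (M i j - density M) * (x i * y j))).
- apply.
  + by move=> i; rewrite big_ord1 mxE.
  + by move=> j; rewrite big_ord1 mxE.
- by move=> i _; apply: eq_bigr => j _; rewrite big_ord1 !mxE.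
Qed.

Lemma pdisc_ge0 n (M : 'M[R]_n) : 0 <= pdisc M.
Proof.
apply: le_trans (cut_lb M (x := fun _ => 0) (y := fun _ => 0) _ _).
- by rewrite big1 ?mulr0 // => i _; rewrite big1 // => j _; rewrite mulr0.
- by move=> i; rewrite expr0n.
- by move=> i; rewrite expr0n.
Qed.

End Aux.

Section Main.
Variable R : realType.

Lemma main_bound n r (M : 'M[R]_n) : (0 < r)%N ->
  (forall i j, M i j = 0 \/ M i j = 1) -> (\rank M <= r)%N ->
  mass M / n%:R <= n%:R / 2 ->
  let d := mass M / n%:R in
  d * n%:R / 4 <= pdisc M \/
  Num.sqrt d * (n%:R * Num.sqrt n%:R) / Num.sqrt r%:R / 64 <= pdisc M.
Proof.
move=> r0 M01 rk hd d.
have [n0|n0] := posnP n.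
  left; have -> : n%:R = 0 :> R by rewrite n0.
  by rewrite mulr0 mul0r; exact: pdisc_ge0.
set p := density M.
set Dr := fun i => \sum_j M i j.
set Dc := fun j => \sum_i M i j.
have nR : 0 < n%:R :> R by rewrite ltr0n.
have nR0 : n%:R != 0 :> R by rewrite gt_eqF.
have massC : mass M = \sum_j Dc j by rewrite /mass exchange_big.
have massR : mass M = \sum_i Dr i by [].
have pn : p * n%:R = d by rewrite /p /density /d; field.
have M0 : forall i j, 0 <= M i j by move=> i j; case: (M01 i j) => ->.
have M1 : forall i j, M i j <= 1 by move=> i j; case: (M01 i j) => ->.
have Msq : forall i j, M i j ^+ 2 = M i j by move=> i j; case: (M01 i j) => ->; rewrite ?expr0n ?expr1n.
have d0 : 0 <= d by rewrite /d divr_ge0 // /mass sumr_ge0 // => i _; rewrite sumr_ge0.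
have hp : p = d / n%:R by rewrite -pn mulfK.
have p0 : 0 <= p by rewrite hp divr_ge0.
have hd' : d <= n%:R / 2 by [].
have p12 : p <= 1 / 2 by rewrite hp ler_pdivrMr //; lra.
have dnE : d * n%:R = mass M by rewrite /d mulfVK.
have Drsum : forall i, \sum_j (M i j - p) = Dr i - d.
  by move=> i; rewrite sumrB sumr_const card_ord -pn mulr_natr.
have Dcsum : forall j, \sum_i (M i j - p) = Dc j - d.
  by move=> j; rewrite sumrB sumr_const card_ord -pn mulr_natr.
set h := fun i => if 2 * d <= Dr i then 1 else 0 : R.
set h' := fun j => if 2 * d <= Dc j then 1 else 0 : R.
have Ha : \sum_i h i * Dr i <= pdisc M.
  apply: le_trans (cut_lb M (x:=h) (y:=fun _ => 1) _ _); last 2 first.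
  - by move=> i; rewrite /h; case: ifP; rewrite ?expr1n ?expr0n.
  - by move=> i; rewrite expr1n.
  rewrite mulr_sumr; apply: ler_sum => i _.
  rewrite (eq_bigr (fun j => h i * (M i j - p))); last by move=> j _; rewrite mulr1 mulrC.
  rewrite -mulr_sumr Drsum /h; case: ifPn => H; lra.
have Hb : \sum_j h' j * Dc j <= pdisc M.
  apply: le_trans (cut_lb M (x:=fun _ => 1) (y:=h') _ _); last 2 first.
  - by move=> i; rewrite expr1n.
  - by move=> i; rewrite /h'; case: ifP; rewrite ?expr1n ?expr0n.
  rewrite exchange_big mulr_sumr; apply: ler_sum => j _ /=.
  rewrite (eq_bigr (fun i => h' j * (M i j - p))); last by move=> i _; rewrite mul1r mulrC.
  rewrite -mulr_sumr Dcsum /h'; case: ifPn => H; lra.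
set C := col_mx M (const_mx 1 : 'M[R]_(1, n)).
have rkC : (\rank C <= r.+1)%N.
  rewrite /C -addsmxE; apply: leq_trans (mxrank_adds_leqif _ _).1 _.
  by rewrite -[r.+1]addn1; apply: leq_add => //; exact: rank_leq_row.
set B' := M + (- p) *: (const_mx 1 : 'M[R]_n).
have B'E : forall i j, B' i j = M i j - p by move=> i j; rewrite !mxE mulr1.
have sBC : (B' <= C)%MS.
  have := submx_refl C; rewrite col_mx_sub => /andP [sM s1].
  rewrite addmx_sub // scalemx_sub //; apply: submx_trans s1.
  have -> : (const_mx 1 : 'M[R]_n) = (const_mx 1 : 'M[R]_(n, 1)) *m const_mx 1.
    by apply/matrixP => a b; rewrite !mxE big_ord1 !mxE mulr1.
  exact: submxMl.
have [P [PT PP trP BP]] := proj_exists C.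
have Psym : forall a b, P a b = P b a by move=> a b; rewrite -{1}PT mxE.
have Pjj : forall j, P j j = \sum_l P j l ^+ 2.
  move=> j; rewrite -{1}PP mxE; apply: eq_bigr => l _; by rewrite (Psym l j) expr2.
have Pjj0 : forall j, 0 <= P j j.
  by move=> j; rewrite Pjj sumr_ge0 // => l _; rewrite sqr_ge0.
have BPe : forall i j, \sum_l B' i l * P j l = B' i j.
  move=> i j; rewrite -{2}(BP _ _ sBC) mxE; apply: eq_bigr => l _; by rewrite Psym.
have trPE : \sum_j P j j = (\rank C)%:R by rewrite -trP.
set S := fun i => \sum_l B' i l ^+ 2.
have S0 : forall i, 0 <= S i by move=> i; rewrite sumr_ge0 // => l _; rewrite sqr_ge0.
set nrm := fun i => Num.sqrt (S i).
have nrm0 : forall i, 0 <= nrm i by move=> i; exact: sqrtr_ge0.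
have nrm2 : forall i, nrm i ^+ 2 = S i by move=> i; rewrite sqr_sqrtr.
set sr := Num.sqrt r%:R.
set sn := Num.sqrt n%:R.
set sd := Num.sqrt d.
have sr0 : 0 < sr by rewrite sqrtr_gt0 ltr0n.
have sn0 : 0 < sn by rewrite sqrtr_gt0.
have sd0 : 0 <= sd by exact: sqrtr_ge0.
set lam0 := sn / (4 * sr).
have lam00 : 0 <= lam0 by rewrite /lam0 divr_ge0 ?mulr_ge0 ?ltW.
have lam02 : lam0 ^+ 2 = n%:R / (16 * r%:R).
  rewrite /lam0 expr_div_n exprMn /sn /sr !sqr_sqrtr ?ler0n //.
  by congr (_ / _); rewrite expr2; congr (_ * _); rewrite -natrM.
set lam := fun j => if lam0 ^+ 2 * P j j <= 1 then lam0 else 0.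
set t := fun j => if lam0 ^+ 2 * P j j <= 1 then 0 else 1 : R.
set U := \matrix_(i < n, l < n) (B' i l / nrm i).
set V := \matrix_(j < n, l < n) (lam j * P j l).
have hU : forall i, \sum_l U i l ^+ 2 <= 1.
  move=> i; rewrite (eq_bigr (fun l => B' i l ^+ 2 / nrm i ^+ 2)); last first.
    by move=> l _; rewrite mxE expr_div_n.
  rewrite -mulr_suml nrm2 -/(S i).
  have [->|Si] := eqVneq (S i) 0; first by rewrite mul0r.
  by rewrite mulfV.
have hV : forall j, \sum_l V j l ^+ 2 <= 1.
  move=> j; rewrite (eq_bigr (fun l => lam j ^+ 2 * P j l ^+ 2)); last first.
    by move=> l _; rewrite mxE exprMn.
  rewrite -mulr_sumr -Pjj /lam; case: ifPn => // _.
  by rewrite expr0n mul0r.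
have H1 := gram M hU hV.
have inner : forall i j, \sum_l U i l * V j l = lam j / nrm i * B' i j.
  move=> i j; rewrite -(BPe i j) mulr_sumr; apply: eq_bigr => l _; rewrite !mxE.
  by rewrite /= ; ring.
have Dr0 : forall i, 0 <= Dr i by move=> i; rewrite sumr_ge0.
have Dc0 : forall j, 0 <= Dc j by move=> j; rewrite sumr_ge0.
have Sform : forall i, S i = (1 - 2 * p) * Dr i + p * d.
  move=> i; rewrite /S (eq_bigr (fun l => (1 - 2 * p) * M i l + p ^+ 2)); last first.
    by move=> l _; rewrite B'E sqrrB Msq -mulr_natr; ring.
  rewrite big_split /= -mulr_sumr sumr_const card_ord -pn -[p ^+ 2 *+ n]mulr_natr -/(Dr i).
  ring.
have Sbound : forall i, h i = 0 -> S i <= 4 * d.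
  move=> i; rewrite /h; case: ifPn => H; first by move/eqP; rewrite oner_eq0.
  move=> _; rewrite -ltNge in H; rewrite Sform.
  have := mulr_ge0 p0 (Dr0 i); have := ler_wpM2r d0 p12; nra.
have Spos : forall i j, M i j = 1 -> 1 / 4 <= S i.
  move=> i j Mij; rewrite /S (bigD1 j) //= B'E Mij.
  have : 0 <= \sum_(l < n | l != j) B' i l ^+ 2 by rewrite sumr_ge0 // => l _; rewrite sqr_ge0.
  nra.
have pw : forall i j, (1 - h i) * (1 - t j) * M i j * (lam0 / (8 * sd)) <=
                      (M i j - p) * (lam j / nrm i * B' i j).
  move=> i j; rewrite B'E.
  have Sb := Sbound i; have Sp := Spos i j.
  rewrite /h /t /lam; case: ifPn => Hh.
    rewrite subrr !mul0r; case: ifPn => _.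
      by rewrite mulrCA -expr2; apply: mulr_ge0; [exact: divr_ge0 lam00 (nrm0 i) | exact: sqr_ge0].
    by rewrite mul0r mul0r mulr0.
  case: ifPn => Ht; last by rewrite subrr mulr0 !mul0r ?mulr0.
  case: (M01 i j) => Mij; rewrite Mij.
    rewrite mulr0 mul0r.
    by rewrite mulrCA -expr2; apply: mulr_ge0; [exact: divr_ge0 lam00 (nrm0 i) | exact: sqr_ge0].
  have Sb' : S i <= 4 * d by apply: Sb; rewrite /h (negbTE Hh).
  have Sp' := Sp Mij.
  have nle : nrm i <= 2 * sd.
    have s4 : Num.sqrt 4 = 2 :> R.
      by rewrite (_ : 4 = 2 ^+ 2) ?sqrtr_sqr ?ger0_norm // expr2 -natrM.
    rewrite /nrm /sd -s4 -sqrtrM // ler_sqrt //; exact: mulr_ge0.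
  have npos : 0 < nrm i by rewrite /nrm sqrtr_gt0; lra.
  have sdpos : 0 < sd by nra.
  have key : 1 / (8 * sd) <= (1 - p) ^+ 2 / nrm i.
    rewrite ler_pdivlMr // mulrC mulrA ler_pdivrMr ?mulr_gt0 //. rewrite mulr1; apply: le_trans nle _.
    have hq : 1 / 4 <= (1 - p) ^+ 2 by rewrite expr2; nra.
    nra.
  have -> : (1 - 0) * (1 - 0) * 1 * (lam0 / (8 * sd)) = lam0 * (1 / (8 * sd)) by ring.
  have -> : (1 - p) * (lam0 / nrm i * (1 - p)) = lam0 * ((1 - p) ^+ 2 / nrm i) by ring.
  exact: ler_wpM2l.
set N := \sum_i \sum_j (1 - h i) * (1 - t j) * M i j.
have H2 : 2 * (N * (lam0 / (8 * sd))) <= pdisc M.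
  apply: le_trans H1; rewrite ler_pM2l // mulr_suml; apply: ler_sum => i _.
  rewrite mulr_suml; apply: ler_sum => j _; rewrite inner; exact: pw.
have Tb : \sum_j t j <= n%:R / 8.
  apply: le_trans (_ : \sum_j lam0 ^+ 2 * P j j <= _).
    apply: ler_sum => j _; rewrite /t; case: ifPn => H.
      by rewrite mulr_ge0 ?sqr_ge0.
    by rewrite -ltNge in H; exact: ltW.
  rewrite -mulr_sumr trPE lam02.
  have rk2 : (\rank C)%:R <= 2 * r%:R :> R.
    by rewrite -natrM ler_nat; apply: leq_trans rkC _; rewrite mul2n -addnn -[r.+1]addn1 leq_add2l.
  have rR : 0 < r%:R :> R by rewrite ltr0n.
  apply: le_trans (_ : n%:R / (16 * r%:R) * (2 * r%:R) <= _).
    by rewrite ler_wpM2l // divr_ge0 // mulr_ge0 // ltW.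
  by rewrite le_eqVlt; apply/orP; left; apply/eqP; field; rewrite gt_eqF.
set a := \sum_i h i * Dr i.
set b := \sum_j h' j * Dc j.
have count : d * n%:R <= a + b + d * n%:R / 4 + N.
  have pt : forall i j, M i j <= h i * M i j + h' j * M i j +
      t j * (1 - h' j) * M i j + (1 - h i) * (1 - t j) * M i j.
    move=> i j; have := M0 i j; rewrite /h /h' /t.
    by case: ifP => _; case: ifP => _; case: ifP => _; lra.
  have E1 : \sum_i \sum_j h i * M i j = a.
    by apply: eq_bigr => i _; rewrite -mulr_sumr.
  have E2 : \sum_i \sum_j h' j * M i j = b.
    by rewrite exchange_big; apply: eq_bigr => j _; rewrite -mulr_sumr.
  have E3 : \sum_i \sum_j t j * (1 - h' j) * M i j <= d * n%:R / 4.
    rewrite exchange_big /=; apply: le_trans (_ : \sum_j t j * (2 * d) <= _).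
      apply: ler_sum => j _; rewrite -mulr_sumr -/(Dc j).
      have := Dc0 j; rewrite /h' /t; case: ifPn => H1'; case: ifPn => H2';
        rewrite -?ltNge in H1' H2' *; nra.
    rewrite -mulr_suml; apply: le_trans (_ : n%:R / 8 * (2 * d) <= _).
      by rewrite ler_wpM2r // mulr_ge0.
    by rewrite le_eqVlt; apply/orP; left; apply/eqP; field.
  have : \sum_i \sum_j M i j <= \sum_i \sum_j (h i * M i j + h' j * M i j +
      t j * (1 - h' j) * M i j + (1 - h i) * (1 - t j) * M i j).
    by apply: ler_sum => i _; apply: ler_sum => j _; exact: pt.
  have Esplit : \sum_i \sum_j (h i * M i j + h' j * M i j +
      t j * (1 - h' j) * M i j + (1 - h i) * (1 - t j) * M i j) =
      \sum_i \sum_j h i * M i j + \sum_i \sum_j h' j * M i j +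
      \sum_i \sum_j t j * (1 - h' j) * M i j + N.
    by rewrite -!big_split; apply: eq_bigr => i _; rewrite -!big_split.
  rewrite Esplit E1 E2 dnE /mass; move: E3; lra.
have a0 : 0 <= a.
  by rewrite sumr_ge0 // => i _; rewrite /h; case: ifP => _; rewrite ?mul1r ?mul0r.
have b0 : 0 <= b.
  by rewrite sumr_ge0 // => j _; rewrite /h'; case: ifP => _; rewrite ?mul1r ?mul0r.
have [Ha1|Ha1] := lerP (d * n%:R / 4) a; first by left; exact: le_trans Ha.
have [Hb1|Hb1] := lerP (d * n%:R / 4) b; first by left; exact: le_trans Hb.
right.
have dpos : 0 < d.
  have : 0 < d * n%:R by lra.
  by rewrite pmulr_lgt0.
have sdpos : 0 < sd by rewrite sqrtr_gt0.
have HN : d * n%:R / 4 <= N by lra.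
apply: le_trans H2.
apply: le_trans (_ : 2 * (d * n%:R / 4 * (lam0 / (8 * sd))) <= _); last first.
  rewrite ler_pM2l // ler_wpM2r //; exact: divr_ge0 lam00 (mulr_ge0 _ (ltW sdpos)).
rewrite le_eqVlt; apply/orP; left; apply/eqP.
rewrite /lam0 -[in RHS](sqr_sqrtr d0) -/sd.
by field; rewrite ?gt_eqF.
Qed.
End Main.

Theorem lemma3p4 :
  exists c : rat, 0 < c /\
  forall (R : realType) (n r : nat) (M : 'M[R]_n),
    (0 < r)%N ->
    (forall i j, M i j = 0 \/ M i j = 1) ->
    (\rank M <= r)%N ->
    mass M / n%:R <= n%:R / 2 ->
    let d := mass M / n%:R in
    ratr c * Num.min (d * n%:R)
                (Num.sqrt d * (n%:R * Num.sqrt n%:R) / Num.sqrt r%:R)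
      <= pdisc M.
Proof.
exists (1 / 64); split; first by rewrite divr_gt0 ?ltr01 ?ltr0n.
move=> R n r M r0 M01 rk hd; cbv zeta; set d := mass M / n%:R.
have -> : ratr (1 / 64 : rat) = 1 / 64 :> R by rewrite fmorph_div rmorph1 rmorph_nat.
have M0 : forall i j, 0 <= M i j by move=> i j; case: (M01 i j) => ->.
have d0 : 0 <= d by rewrite /d divr_ge0 // /mass sumr_ge0 // => i _; rewrite sumr_ge0.
have dn0 : 0 <= d * n%:R by rewrite mulr_ge0.
have X0 : 0 <= Num.sqrt d * (n%:R * Num.sqrt n%:R) / Num.sqrt r%:R.
  by rewrite divr_ge0 ?sqrtr_ge0 // mulr_ge0 ?sqrtr_ge0 // mulr_ge0 ?sqrtr_ge0.
case: (main_bound r0 M01 rk hd) => H.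
- apply: le_trans H.
  apply: le_trans (_ : 1 / 64 * (d * n%:R) <= _).
    apply: ler_wpM2l; first lra.
    by rewrite ge_min lexx.
  rewrite -/d; lra.
- apply: le_trans H.
  apply: le_trans (_ : 1 / 64 * (Num.sqrt d * (n%:R * Num.sqrt n%:R) / Num.sqrt r%:R) <= _).
    apply: ler_wpM2l; first lra.
    by rewrite ge_min lexx orbT.
  rewrite -/d; lra.
Qed.
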